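(* Let $r\in\mathfrak{b}$ have pairwise distinct diagonal entries and let $b_{11},\dots,b_{nn}\in\mathbb{C}^*$. Then $b=\sum_{\iota=1}^nE_{\iota\iota}\operatorname{diag}(b_{11},\dots,b_{nn})L^\iota(r)$ is an invertible upper triangular matrix with diagonal entries $b_{11},\dots,b_{nn}$, and $brb^{-1}=\operatorname{diag}(r_{11},\dots,r_{nn})$. Explicitly, $b_{\iota\gamma}=0$ for $\iota>\gamma$ and for $\iota<\gamma$ $$b_{\iota\gamma}=b_{\iota\iota}\Big(\frac{r_{\iota\gamma}}{r_{\iota\iota}-r_{\gamma\gamma}}+\sum_{v=1}^{\gamma-\iota-1}\sum_{\iota<k_1<\dots<k_v<\gamma}\frac{r_{\iota k_1}r_{k_v\gamma}}{(r_{\iota\iota}-r_{k_1k_1})(r_{\iota\iota}-r_{\gamma\gamma})}\prod_{u=1}^{v-1}\frac{r_{k_uk_{u+1}}}{r_{\iota\iota}-r_{k_{u+1}k_{u+1}}}\Big).$$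
   Context: $\mathfrak{b}$ is the space of upper triangular complex $n\times n$ matrices; $E_{\iota\iota}$ is the matrix unit with $1$ in position $(\iota,\iota)$. $L^\iota(r)=\big[\operatorname{tr}\prod_{k\ne\iota}(r-r_{kk}I)\big]^{-1}\prod_{k\ne\iota}(r-r_{kk}I)$. Empty sums are $0$ and empty products are $1$. *)

(* Defs.v *)
(* C = R[i] with R : realType is the complex field. *)
From HB Require Import structures.
From mathcomp Require Import all_boot all_order all_algebra.
From mathcomp Require Import reals complex.
Set Implicit Arguments. Unset Strict Implicit. Unset Printing Implicit Defensive.
Import Order.TTheory GRing.Theory Num.Theory.
Local Open Scope ring_scope.

Definition upper_tri (K : pzRingType) n (A : 'M[K]_n) : Prop :=
  forall i j : 'I_n, (j < i)%N -> A i j = 0.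

Definition Lprod (K : fieldType) n (r : 'M[K]_n) (i : 'I_n) : 'M[K]_n :=
  \big[mulmx/1%:M]_(k < n | k != i) (r - (r k k)%:M).

Definition Lmat (K : fieldType) n (r : 'M[K]_n) (i : 'I_n) : 'M[K]_n :=
  (\tr (Lprod r i))^-1 *: Lprod r i.

Definition bmat (K : fieldType) n (r : 'M[K]_n) (bd : 'I_n -> K) : 'M[K]_n :=
  \sum_(i < n) (delta_mx i i *m diag_mx (\row_j bd j) *m Lmat r i).

(* the summand for a chain i < k_1 < ... < k_v < j, k_u = nth i k (u-1) *)
Definition chain_term (K : fieldType) n (r : 'M[K]_n) (i j : 'I_n) (v : nat)
  (k : v.-tuple 'I_n) : K :=
  let kk u := nth i k u in
  r i (kk 0%N) * r (kk v.-1) j / ((r i i - r (kk 0%N) (kk 0%N)) * (r i i - r j j))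
  * \prod_(0 <= u < v.-1) (r (kk u) (kk u.+1) / (r i i - r (kk u.+1) (kk u.+1))).

Definition chain_between n (i j : 'I_n) (v : nat) (k : v.-tuple 'I_n) : bool :=
  sorted ltn (map val k) && all (fun x : 'I_n => (i < x < j)%N) k.

Definition b_formula (K : fieldType) n (r : 'M[K]_n) (bd : 'I_n -> K) (i j : 'I_n) : K :=
  bd i * (r i j / (r i i - r j j)
    + \sum_(1 <= v < (j - i)%N) \sum_(k : v.-tuple 'I_n | chain_between i j k)
        chain_term r i j k).

(* Main.v *)
Require Import Defs.
From HB Require Import structures.
From mathcomp Require Import all_boot all_order all_algebra.
From mathcomp Require Import reals complex.
From mathcomp Require Import ring zify.
Import Order.TTheory GRing.Theory Num.Theory.
Set Implicit Arguments. Unset Strict Implicit. Unset Printing Implicit Defensive.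
Local Open Scope ring_scope.


Lemma ut_mul (K : fieldType) n (A B : 'M[K]_n) : upper_tri A -> upper_tri B ->
  upper_tri (A *m B) /\ forall i, (A *m B) i i = A i i * B i i.
Proof.
move=> hA hB; split.
  move=> i j ji; rewrite mxE big1 // => k _.
  case: (ltnP k i) => ki; first by rewrite hA // mul0r.
  by rewrite hB ?mulr0 //; apply: leq_trans ji ki.
move=> i; rewrite mxE (bigD1 i) //= big1 ?addr0 // => k ki.
case: (ltngtP k i) => c; first by rewrite hA // mul0r.
  by rewrite hB ?mulr0.
by move: ki; rewrite -val_eqE /= c eqxx.
Qed.

Lemma ut_prod (K : fieldType) n (P : pred 'I_n) (F : 'I_n -> 'M[K]_n) :
  (forall k, upper_tri (F k)) ->
  upper_tri (\big[mulmx/1%:M]_(k < n | P k) F k) /\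
  forall i, (\big[mulmx/1%:M]_(k < n | P k) F k) i i = \prod_(k < n | P k) F k i i.
Proof.
move=> hF; split.
  apply: (big_ind (fun A : 'M[K]_n => upper_tri A)).
  - move=> i j ji; rewrite mxE; case: eqP => // e.
    by move: ji; rewrite e ltnn.
  - by move=> A B hA hB; case: (ut_mul hA hB).
  - by move=> k _; apply: hF.
move=> i.
suff: upper_tri (\big[mulmx/1%:M]_(k < n | P k) F k) /\
  (\big[mulmx/1%:M]_(k < n | P k) F k) i i = \prod_(k < n | P k) F k i i by case.
apply: (big_rec2 (fun (A : 'M[K]_n) x => upper_tri A /\ A i i = x)).
- split; last by rewrite mxE eqxx.
  move=> a j ji; rewrite mxE; case: eqP => // e.
  by move: ji; rewrite e ltnn.
- move=> k A x _ [hA <-]; case: (ut_mul (hF k) hA) => h1 h2; split => //; by rewrite h2.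
Qed.

Lemma ut_subC (K : fieldType) n (r : 'M[K]_n) c : upper_tri r -> upper_tri (r - c%:M).
Proof.
move=> hr i j ji; rewrite !mxE hr // ; case: eqP => [e|_]; last by rewrite mulr0n subr0.
by move: ji; rewrite e ltnn.
Qed.

Lemma char_poly_tr (K : fieldType) n (A : 'M[K]_n) : char_poly A^T = char_poly A.
Proof.
rewrite /char_poly -det_tr; congr (\det _); apply/matrixP => i j.
by rewrite !mxE eq_sym.
Qed.

Lemma Lprod_annih (K : fieldType) n (r : 'M[K]_n) (i : 'I_n) : upper_tri r ->
  Lprod r i *m (r - (r i i)%:M) = 0.
Proof.
move=> hr; case: n r i hr => [|n] r i hr; first by case: i.
have cp : char_poly r = \prod_(k < n.+1) ('X - (r k k)%:P).
  rewrite -char_poly_tr char_poly_trig; first by apply: eq_bigr => k _; rewrite mxE.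
  by apply/is_trig_mxP => a b ab; rewrite mxE hr.
have := Cayley_Hamilton r; rewrite cp (bigD1 i) //= mulrC rmorphM /=.
rewrite rmorph_prod rmorphB /= horner_mx_X horner_mx_C => <-.
rewrite /Lprod mulmxE; congr (_ * _).
by apply: eq_bigr => k _; rewrite rmorphB /= horner_mx_X horner_mx_C.
Qed.


Lemma Lprod_ut (K : fieldType) n (r : 'M[K]_n) i : upper_tri r ->
  upper_tri (Lprod r i) /\ forall j, Lprod r i j j = \prod_(k < n | k != i) (r j j - r k k).
Proof.
move=> hr; have [h1 h2] := @ut_prod K n (fun k => k != i) (fun k => r - (r k k)%:M)
   (fun k => ut_subC (r k k) hr).
split => // j; rewrite /Lprod h2; apply: eq_bigr => k _.
by rewrite !mxE eqxx mulr1n.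
Qed.

Lemma Lprod_diag0 (K : fieldType) n (r : 'M[K]_n) i j : upper_tri r -> j != i ->
  Lprod r i j j = 0.
Proof.
move=> hr ji; by rewrite (proj2 (Lprod_ut i hr)) (bigD1 j) //= subrr mul0r.
Qed.

Lemma Lprod_diag_neq0 (K : fieldType) n (r : 'M[K]_n) i : upper_tri r ->
  (forall k l : 'I_n, k != l -> r k k != r l l) -> Lprod r i i i != 0.
Proof.
move=> hr hd; rewrite (proj2 (Lprod_ut i hr)); apply/prodf_neq0 => k ki.
by rewrite subr_eq0 hd // eq_sym.
Qed.

Lemma Lprod_tr (K : fieldType) n (r : 'M[K]_n) i : upper_tri r ->
  \tr (Lprod r i) = Lprod r i i i.
Proof.
move=> hr; rewrite /mxtrace (bigD1 i) //= big1 ?addr0 // => j ji.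
exact: Lprod_diag0.
Qed.

Lemma bmatE (K : fieldType) n (r : 'M[K]_n) bd k l :
  bmat r bd k l = bd k * Lmat r k k l.
Proof.
rewrite /bmat summxE (bigD1 k) //= big1 ?addr0.
  rewrite mul_mx_diag mxE (bigD1 k) //= big1 ?addr0 ?mxE ?eqxx //= ?mul1r //.
  by move=> j jk; rewrite !mxE (negbTE jk) andbF mul0r mul0r.
move=> i ik; rewrite mul_mx_diag mxE big1 // => j _.
by rewrite !mxE (eq_sym k i) (negbTE ik) mul0r mul0r.
Qed.


Lemma path_size_bound (j : nat) (s : seq nat) (a : nat) : s != [::] ->
  path ltn a s -> all (fun x => x < j)%N s -> (a + size s < j)%N.
Proof.
elim: s a => // x s IH a _ /= /andP[ax px] /andP[xj aj].
case: s IH px aj => [|y s] IH px aj; first by rewrite addn1 (leq_ltn_trans ax xj).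
have := IH x isT px aj; rewrite /= => h.
by rewrite addnS; apply: leq_ltn_trans h; rewrite ltn_add2r.
Qed.

Lemma chain_size n (k j : 'I_n) v (t : v.-tuple 'I_n) :
  (0 < v)%N -> chain_between k j t -> (v < j - k)%N.
Proof.
move=> v0 /andP[so al].
have ne : map val t != [::] by rewrite -size_eq0 size_map size_tuple -lt0n.
have pa : path ltn k (map val t).
  case: (tval t) so al ne => [|x s] //= so /andP[/andP[kx _] _] _; rewrite so andbT //.
have := path_size_bound (j:=j) ne pa.
rewrite size_map size_tuple => h.
have /h : all (fun x => x < j)%N (map val t).
  by rewrite all_map; apply: sub_all al => x /andP[].
by move=> kvj; rewrite ltn_subRL.
Qed.

Lemma chain_rcons n (k l j : 'I_n) v (t : v.-tuple 'I_n) :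
  chain_between k l [tuple of rcons t j] = (k < j < l)%N && chain_between k j t.
Proof.
rewrite /chain_between /= map_rcons all_rcons.
rewrite (sorted_pairwise ltn_trans) pairwise_rcons -(sorted_pairwise ltn_trans) all_map.
case kjl: (k < j < l)%N => /=; last first.
  by rewrite !andbF.
move/andP: kjl => [kj jl].
rewrite -andbA andbCA; congr (_ && _).
apply/idP/idP.
  move=> /andP[h1 h2]; apply/allP => x xt.
  by move: (allP h1 x xt) (allP h2 x xt) => /= xj /andP[kx _]; rewrite kx xj.
move=> h; apply/andP; split; apply/allP => x xt; case/andP: (allP h x xt) => // a b.
by rewrite a (ltn_trans b jl).
Qed.



Lemma chain_term_rcons (K : fieldType) n (r : 'M[K]_n) (k l j : 'I_n) v (t : v.-tuple 'I_n) :
  chain_term r k l [tuple of rcons t j] =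
  (if v is v'.+1 then chain_term r k j t else r k j / (r k k - r j j)) *
  (r j l / (r k k - r l l)).
Proof.
case: v t => [|v] t.
  rewrite tuple0 /chain_term /= big_geq //= mulr1.
  by rewrite invfM; ring.
have st : size t = v.+1 by rewrite size_tuple.
rewrite /chain_term /= big_nat_recr //=.
rewrite !nth_rcons st /= ltnS leqnn ltnn eqxx.
rewrite [X in _ * (X * _) = _](_ : _ = \prod_(0 <= u < v) (r (nth k t u) (nth k t u.+1) / (r k k - r (nth k t u.+1) (nth k t u.+1)))).
  by rewrite !invfM; ring.
apply: eq_big_nat => u /andP[_ uv].
by rewrite !nth_rcons st ltnS (ltnW uv) ltnS uv.
Qed.

Definition Hs (K : fieldType) n (r : 'M[K]_n) (k j : 'I_n) v :=
  \sum_(t : v.-tuple 'I_n | chain_between k j t) chain_term r k j t.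

Lemma H_rcons (K : fieldType) n (r : 'M[K]_n) (k l : 'I_n) v :
  Hs r k l v.+1 = \sum_(j : 'I_n | (k < j < l)%N)
    (if v is v'.+1 then Hs r k j v else r k j / (r k k - r j j)) *
    (r j l / (r k k - r l l)).
Proof.
rewrite /Hs (reindex (fun p : 'I_n * v.-tuple 'I_n => [tuple of rcons p.2 p.1])) /=.
  rewrite (eq_bigl (fun p : 'I_n * v.-tuple 'I_n => (k < p.1 < l)%N && chain_between k p.1 p.2)); last first.
    by move=> p; rewrite chain_rcons.
  rewrite -(pair_big_dep (fun j : 'I_n => (k < j < l)%N)
    (fun j (t : v.-tuple 'I_n) => chain_between k j t)
    (fun j (t : v.-tuple 'I_n) => chain_term r k l [tuple of rcons t j])) /=.
  apply: eq_bigr => j kjl.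
  under eq_bigr do rewrite chain_term_rcons.
  rewrite -big_distrl /=; congr (_ * _).
  case: v => [|v] //=.
  rewrite (eq_bigl (pred1 [tuple])) ?big_pred1_eq // => t.
  by rewrite tuple0; apply/esym/eqP.
exists (fun u : v.+1.-tuple 'I_n => (last (thead u) (behead u), [tuple of belast (thead u) (behead u)])).
  move=> [j t] _ /=.
  set u := [tuple of rcons t j].
  have := congr1 val (tuple_eta u); rewrite /= => e; symmetry in e.
  rewrite lastI in e; case: (rcons_inj e) => e1 e2.
  by rewrite e2; congr (_, _); apply: val_inj.
move=> u _; apply: val_inj => /=.
by rewrite -lastI; have := congr1 val (tuple_eta u); rewrite /= => ->.
Qed.



Lemma Hs_big (K : fieldType) n (r : 'M[K]_n) (k j : 'I_n) v :
  (0 < v)%N -> (j - k <= v)%N -> Hs r k j v = 0.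
Proof.
move=> v0 jv; apply: big1 => t ch.
have := chain_size v0 ch; lia.
Qed.

Lemma G_rec (K : fieldType) n (r : 'M[K]_n) (k l : 'I_n) : (k < l)%N ->
  \sum_(1 <= v < (l - k)%N) Hs r k l v =
  \sum_(j : 'I_n | (k < j < l)%N) (r k j / (r k k - r j j) +
     \sum_(1 <= v < (j - k)%N) Hs r k j v) * (r j l / (r k k - r l l)).
Proof.
move=> kl; rewrite big_add1 /=.
under eq_bigr do rewrite H_rcons.
rewrite exchange_big /=; apply: eq_bigr => j /andP[kj jl].
rewrite -big_distrl /=; congr (_ * _).
rewrite big_ltn /=; last by lia.
congr (_ + _).
rewrite (big_cat_nat (n := (j - k)%N)) /=; [|lia|lia].
rewrite [X in _ + X]big1_seq ?addr0; last first.
  move=> v /andP[_]; rewrite mem_index_iota => /andP[h1 h2].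
  by case: v h1 h2 => [|v] h1 h2; [lia | rewrite /= Hs_big //; lia].
rewrite big_nat_cond [RHS]big_nat_cond; apply: eq_bigr => v /andP[/andP[h1 _] _].
by case: v h1.
Qed.

Lemma sum_split (K : fieldType) n (r : 'M[K]_n) (k l : 'I_n) (x : 'I_n -> K) :
  upper_tri r -> (forall j : 'I_n, (j < k)%N -> x j = 0) -> (k < l)%N ->
  \sum_j x j * r j l = x k * r k l + \sum_(j : 'I_n | (k < j < l)%N) x j * r j l + x l * r l l.
Proof.
move=> hr x0 kl.
have lk : l != k by rewrite -val_eqE /=; lia.
rewrite [LHS](bigD1 k) //= [in LHS](bigD1 l) //=.
rewrite -addrA; congr (_ + _); rewrite addrC; congr (_ + _).
rewrite big_mkcond [RHS]big_mkcond; apply: eq_bigr => j _ /=.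
rewrite -!val_eqE /=.
case: (ltngtP j k) => jk /=.
- by rewrite x0 // mul0r; case: ifP.
- case: (ltngtP j l) => jl //=.
  by rewrite (hr j l) // mulr0.
- by [].
Qed.

Lemma chain_rec (K : fieldType) n (r : 'M[K]_n) (k : 'I_n) (x : 'I_n -> K) :
  upper_tri r -> (forall a b : 'I_n, a != b -> r a a != r b b) ->
  (forall j : 'I_n, (j < k)%N -> x j = 0) -> x k = 1 ->
  (forall l : 'I_n, \sum_j x j * r j l = r k k * x l) ->
  forall l : 'I_n, (k < l)%N -> x l = r k l / (r k k - r l l) +
    \sum_(1 <= v < (l - k)%N) \sum_(t : v.-tuple 'I_n | chain_between k l t) chain_term r k l t.
Proof.
move=> hr hd x0 x1 xr.
suff h : forall m (l : 'I_n), (l < m)%N -> (k < l)%N -> x l = r k l / (r k k - r l l) +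
    \sum_(1 <= v < (l - k)%N) Hs r k l v.
  by move=> l kl; apply: (h l.+1).
elim=> [|m IH] l // lm kl.
case: (ltnP l m) => [lm'|ml]; first exact: IH.
have dl : r k k - r l l != 0.
  by rewrite subr_eq0 hd // -val_eqE /=; lia.
have hl : (r k k - r l l) * x l = r k l + \sum_(j : 'I_n | (k < j < l)%N) x j * r j l.
  have := xr l; rewrite (sum_split hr x0 kl) // x1 mul1r => e.
  by rewrite mulrBl -e; ring.
apply: (mulfI dl); rewrite hl G_rec // mulrDr.
rewrite mulrCA divff // mulr1; congr (_ + _).
rewrite big_distrr; apply: eq_bigr => j /andP[kj jl].
rewrite (IH j) //; last by lia.
set A := (X in X * r j l = _); rewrite [RHS]/= mulrCA.
by rewrite [X in _ = _ * X]mulrCA divff // mulr1.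
Qed.




Lemma main_gen (K : fieldType) (n : nat) (r : 'M[K]_n)
  (bd : 'I_n -> K)
  (hr : upper_tri r)
  (hdist : forall k l : 'I_n, k != l -> r k k != r l l)
  (hb : forall k : 'I_n, bd k != 0) :
  let b := bmat r bd in
  [/\ upper_tri b, b \in unitmx, (forall k : 'I_n, b k k = bd k),
      b *m r *m invmx b = diag_mx (\row_k r k k)
    & forall k l : 'I_n, (k < l)%N -> b k l = b_formula r bd k l].
Proof.
move=> b.
have bE : forall k l, b k l = bd k * Lmat r k k l by move=> k l; apply: bmatE.
have Ldiag : forall k, Lmat r k k k = 1.
  by move=> k; rewrite mxE Lprod_tr // mulVf // Lprod_diag_neq0.
have Lut : forall k (a c : 'I_n), (c < a)%N -> Lmat r k a c = 0.
  by move=> k a c ca; rewrite mxE (proj1 (Lprod_ut k hr)) // mulr0.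
have Lr : forall k, Lmat r k *m r = r k k *: Lmat r k.
  move=> k; have := Lprod_annih k hr; rewrite mulmxBr mul_mx_scalar => /eqP.
  by rewrite subr_eq0 => /eqP h; rewrite /Lmat -scalemxAl h scalerA mulrC -scalerA.
have Lre : forall k l, \sum_j Lmat r k k j * r j l = r k k * Lmat r k k l.
  by move=> k l'; have := congr1 (fun A : 'M[K]_n => A k l') (Lr k); rewrite !mxE.
have bdiag : forall k, b k k = bd k by move=> k; rewrite bE Ldiag mulr1.
have but : upper_tri b by move=> k l lk; rewrite bE Lut // mulr0.
have bunit : b \in unitmx.
  rewrite unitmxE -det_tr det_trig; last first.
    by apply/is_trig_mxP => a c ac; rewrite mxE but.
  rewrite unitfE; apply/prodf_neq0 => k _; rewrite mxE bdiag; exact: hb.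
split => //.
  have -> : b *m r = diag_mx (\row_k r k k) *m b.
    apply/matrixP => k l; rewrite mul_diag_mx !mxE.
    rewrite bE mulrCA -Lre big_distrr; apply: eq_bigr => j _.
    by rewrite bE; exact: (esym (mulrA _ _ _)).
  by rewrite -mulmxA mulmxV // mulmx1.
move=> k l kl; rewrite bE /b_formula; congr (_ * _).
apply: chain_rec => //.
by move=> j jk; apply: Lut.
Qed.

Theorem mainTheorem16 (R : realType) (n : nat) (r : 'M[R[i]]_n)
  (bd : 'I_n -> R[i])
  (hr : upper_tri r)
  (hdist : forall k l : 'I_n, k != l -> r k k != r l l)
  (hb : forall k : 'I_n, bd k != 0) :
  let b := bmat r bd in
  [/\ upper_tri b, b \in unitmx, (forall k : 'I_n, b k k = bd k),
      b *m r *m invmx b = diag_mx (\row_k r k k)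
    & forall k l : 'I_n, (k < l)%N -> b k l = b_formula r bd k l].
Proof. exact: main_gen. Qed.
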